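(* Let $k\ge 1$, $l_0,l_1,\dots,l_k$ and $m_1,\dots,m_k$ be non-negative integers with $l_0>0$, $l_i\ge m_i$ for all $1\le i\le k$, and $l'>m'>0$, where $l'=\sum_{i=1}^k l_i$ and $m'=\sum_{i=1}^k m_i$. For a meromorphic function $f$ put $$P[f]=f^{l_0}(f^{l_1})^{(m_1)}(f^{l_2})^{(m_2)}\cdots (f^{l_k})^{(m_k)}.$$ Let $\omega\not\equiv 0$ be a polynomial of degree $m<l_0$, and let $f$ be a non-constant rational function whose poles, if any, all have multiplicity at least $l_0$. Then $P[f]-\omega$ has at least two distinct zeros in $\mathbb{C}$. *)

(* Defs.v *)
(* Complex numbers are modelled as R[i] = complex R for an
   arbitrary R : realType; rational functions as pairs (numerator, denominator)
   of polynomials over R[i]. *)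
From HB Require Import structures.
From mathcomp Require Import all_boot all_order all_algebra.
From mathcomp Require Import reals complex.
Set Implicit Arguments. Unset Strict Implicit. Unset Printing Implicit Defensive.
Import Order.TTheory GRing.Theory Num.Theory.
Local Open Scope ring_scope.

Section RatFun.
Variable F : fieldType.

(* A rational function is represented by a pair (a, b) meaning a / b, b <> 0. *)
Definition rmul (x y : {poly F} * {poly F}) : {poly F} * {poly F} :=
  (x.1 * y.1, x.2 * y.2).

Definition rexp (x : {poly F} * {poly F}) (n : nat) : {poly F} * {poly F} :=
  (x.1 ^+ n, x.2 ^+ n).

(* quotient rule: (a/b)' = (a' b - a b') / b^2 *)
Definition rderiv (x : {poly F} * {poly F}) : {poly F} * {poly F} :=
  (x.1^`() * x.2 - x.1 * x.2^`(), x.2 ^+ 2).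

Definition rderivn (n : nat) (x : {poly F} * {poly F}) := iter n rderiv x.

Definition rsubpoly (x : {poly F} * {poly F}) (w : {poly F}) :=
  (x.1 - w * x.2, x.2).

(* the rational function a/b (b <> 0) has a zero at z: it is regular at z
   with value 0, i.e. a/b = a'/b' with b'(z) <> 0 and a'(z) = 0. *)
Definition rzero_at (x : {poly F} * {poly F}) (z : F) : Prop :=
  exists a' b' : {poly F}, x.1 * b' = a' * x.2 /\ b'.[z] != 0 /\ a'.[z] = 0.

Definition Pdiff (k : nat) (l0 : nat) (l m : nat -> nat)
  (f : {poly F} * {poly F}) : {poly F} * {poly F} :=
  rmul (rexp f l0)
    (\big[rmul/(1, 1)]_(1 <= i < k.+1) rderivn (m i) (rexp f (l i))).

End RatFun.

(* Main.v *)
Require Import Defs.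
From HB Require Import structures.
From mathcomp Require Import all_boot all_order all_algebra.
From mathcomp Require Import reals complex.
From mathcomp Require Import ring lra zify.
From Stdlib Require Import Classical_Prop.
Set Implicit Arguments. Unset Strict Implicit. Unset Printing Implicit Defensive.
Import Order.TTheory GRing.Theory Num.Theory.
Local Open Scope ring_scope.

Section Val.
Variable F : numClosedFieldType.
Implicit Types a b : {poly F}.
Implicit Types x y : {poly F} * {poly F}.

Definition vz z x : int := (mup z x.1)%:Z - (mup z x.2)%:Z.
Definition dg x : int := (size x.1)%:Z - (size x.2)%:Z.

Lemma mup_split a z : a != 0 ->
  exists a1, ~~ root a1 z /\ a = a1 * ('X - z%:P) ^+ (mup z a).
Proof.
move=> a0; have [k [a1 /implyP/(_ a0) Na1 Ea]] := multiplicity_XsubC a z.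
exists a1; split=> //.
by rewrite {2}Ea mupMr // mup_XsubCX eqxx.
Qed.

Lemma mup_fac a1 k z : ~~ root a1 z -> mup z (a1 * ('X - z%:P) ^+ k) = k.
Proof. by move=> H; rewrite mupMr // mup_XsubCX eqxx. Qed.

Lemma mup_le_size a z : a != 0 -> (mup z a < size a)%N.
Proof.
move=> a0; have [a1 [Na1 Ea]] := mup_split z a0.
have a10 : a1 != 0 by apply: contraNneq Na1 => ->; rewrite root0.
rewrite {2}Ea size_mul ?expf_neq0 ?polyXsubC_eq0 // size_exp_XsubC.
move: (size_poly_gt0 a1); rewrite a10 => H; by rewrite addnS /= addnC -{1}(addn0 (mup z a)) ltn_add2l.
Qed.


Lemma Xz_derivX z k :
  ('X - z%:P) * (('X - z%:P) ^+ k)^`() = ('X - z%:P) ^+ k * k%:R :> {poly F}.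
Proof.
rewrite deriv_exp derivXsubC mul1r -mulr_natr mulrA.
by case: k => [|k]; rewrite ?mulr0 //= -exprS.
Qed.

Lemma Xz_deriv a1 k z : ('X - z%:P) * (a1 * ('X - z%:P) ^+ k)^`() =
  ('X - z%:P) ^+ k * (('X - z%:P) * a1^`() + a1 * k%:R).
Proof.
rewrite derivM mulrDr [X in _ + X]mulrCA Xz_derivX; ring.
Qed.

Lemma mupXz (c : {poly F}) z : c != 0 -> mup z (('X - z%:P) * c) = (mup z c).+1.
Proof.
move=> c0; rewrite mupM ?polyXsubC_eq0 //.
by rewrite -[X in mup z X]expr1 mup_XsubCX eqxx.
Qed.

Lemma mup_fac2 k (c : {poly F}) z : c != 0 -> mup z (('X - z%:P) ^+ k * c) = (k + mup z c)%N.
Proof.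
move=> c0; rewrite mupM ?expf_neq0 ?polyXsubC_eq0 //.
by rewrite mup_XsubCX eqxx.
Qed.

Lemma deriv_mup a b z : a != 0 -> b != 0 ->
  let N := a^`() * b - a * b^`() in
  [/\ N != 0 -> (mup z a + mup z b <= (mup z N).+1)%N,
      N != 0 -> mup z a = mup z b -> (mup z a + mup z b <= mup z N)%N &
      mup z a != mup z b -> N != 0 /\ (mup z N).+1 = (mup z a + mup z b)%N].
Proof.
move=> a0 b0 N.
have [a1 [Na1 Ea]] := mup_split z a0.
have [b1 [Nb1 Eb]] := mup_split z b0.
set al := mup z a in Ea *; set be := mup z b in Eb *.
set Xz := ('X - z%:P).
pose br := (al%:R - be%:R : {poly F}) * (a1 * b1) + Xz * (a1^`() * b1 - a1 * b1^`()).
have EN : Xz * N = Xz ^+ (al + be) * br.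
  rewrite /N mulrBr mulrA mulrA (mulrC Xz a) -(mulrA a) Ea Eb !Xz_deriv /br.
  rewrite exprD /Xz; ring.
have brz : br.[z] = (al%:R - be%:R) * (a1.[z] * b1.[z]).
  rewrite /br !hornerE !hornerMn !hornerE subrr mul0r addr0 //.
have Xz0 : Xz != 0 by rewrite polyXsubC_eq0.
have key : N != 0 -> (mup z N).+1 = (al + be + mup z br)%N.
  move=> N0; rewrite -mupXz // EN mup_fac2 //.
  apply: contraNneq N0 => br0; move: EN; rewrite br0 mulr0 => /eqP.
  by rewrite mulf_eq0 (negbTE Xz0) /= => /eqP ->.
split.
- by move=> N0; rewrite key // leq_addr.
- move=> N0 Eab; rewrite -ltnS key // -[X in (X < _)%N]addn0 ltn_add2l.
  have br0 : br != 0.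
    apply: contraNneq N0 => br0; move: EN; rewrite br0 mulr0 => /eqP.
    by rewrite mulf_eq0 (negbTE Xz0) /= => /eqP ->.
  have : br = Xz * (a1^`() * b1 - a1 * b1^`()).
    by rewrite /br Eab subrr mul0r add0r.
  move=> Ebr; rewrite Ebr mupXz //; apply: contraNneq br0 => c0; by rewrite Ebr c0 mulr0.
- move=> Nab.
  have brz0 : br.[z] != 0.
    rewrite brz mulf_neq0 // ?mulf_neq0 //; first by rewrite subr_eq0 eqr_nat.
  have br0 : br != 0 by apply: contraNneq brz0 => ->; rewrite horner0.
  have N0 : N != 0.
    apply/negP => /eqP N0; move: EN; rewrite N0 mulr0 => /esym/eqP.
    by rewrite mulf_eq0 expf_eq0 (negbTE Xz0) andbF (negbTE br0).
  split=> //; rewrite key // mupNroot ?addn0 //.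
Qed.


Lemma mup_exp (b : {poly F}) z n : b != 0 -> mup z (b ^+ n) = (mup z b * n)%N.
Proof.
move=> b0; elim: n => [|n IH]; first by rewrite expr0 muln0 mupNroot // root1.
by rewrite exprS mupM ?expf_neq0 // IH mulnS.
Qed.

Lemma rderiv2_neq0 x : x.2 != 0 -> (rderiv x).2 != 0.
Proof. by move=> H; rewrite /= expf_neq0. Qed.

Lemma rderiv_nz1 x : (rderiv x).1 != 0 -> x.1 != 0.
Proof. by apply: contraNneq => /= ->; rewrite mul0r derivC mul0r subrr. Qed.

Lemma vz_rderiv x z : x.1 != 0 -> x.2 != 0 -> (rderiv x).1 != 0 ->
   vz z x - 1 <= vz z (rderiv x) /\ (0 <= vz z x -> 0 <= vz z (rderiv x)).
Proof.
move=> a0 b0 N0; have [H1 H2 H3] := deriv_mup z a0 b0.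
rewrite /vz /= mup_exp //.
have {}H1 := H1 N0.
case: (eqVneq (mup z x.1) (mup z x.2)) => E.
  have {}H2 := H2 N0 E; move: H1 H2; set A := mup z x.1; set B := mup z x.2; set C := mup z (_ - _). move=> *; split; lia.
have [_ {}H3] := H3 E; move: H1 H3; set A := mup z x.1; set B := mup z x.2; set C := mup z (_ - _); move=> *; split; lia.
Qed.

Lemma vz_rderiv_ex x z : x.1 != 0 -> x.2 != 0 -> vz z x != 0 ->
  (rderiv x).1 != 0 /\ vz z (rderiv x) = vz z x - 1.
Proof.
move=> a0 b0 v0; have [H1 H2 H3] := deriv_mup z a0 b0.
have E : mup z x.1 != mup z x.2.
  by apply: contraNneq v0 => E; rewrite /vz E subrr.
have [N0 {}H3] := H3 E; split => //.
rewrite /vz /= mup_exp //; move: H3; set A := mup z x.1; set B := mup z x.2; set C := mup z (_ - _); move=> *; lia.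
Qed.

Lemma size_deriv_le (a : {poly F}) : (size a^`() <= (size a).-1)%N.
Proof. exact: size_poly. Qed.

Lemma dg_rderiv x : x.2 != 0 -> (rderiv x).1 != 0 -> dg (rderiv x) <= dg x - 1.
Proof.
move=> b0 N0; have a0 := rderiv_nz1 N0.
rewrite /dg /= expr2 size_mul //.
have h1 := size_polyMleq x.1^`() x.2.
have h2 := size_polyMleq x.1 x.2^`().
have h3 := size_polyD (x.1^`() * x.2) (- (x.1 * x.2^`())).
rewrite size_polyN in h3.
have h4 := size_deriv_le x.1; have h5 := size_deriv_le x.2.
have h6 : (0 < size x.1)%N by rewrite size_poly_gt0.
have h7 : (0 < size x.2)%N by rewrite size_poly_gt0.
have h8 := N0; rewrite -size_poly_gt0 /= in h8.
move: h1 h2 h3 h4 h5 h6 h7 h8.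
set s1 := size x.1; set s2 := size x.2; set s3 := size (_ - _ : {poly F}).
set s4 := size (_ * x.2 : {poly F}); set s5 := size (x.1 * _ : {poly F}); set s6 := size x.1^`(); set s7 := size x.2^`().
move=> *; lia.
Qed.


Lemma rderivnS n x : rderivn n.+1 x = rderiv (rderivn n x).
Proof. by rewrite /rderivn iterS. Qed.

Lemma rderivn0 x : rderivn 0 x = x.
Proof. by []. Qed.

Lemma rderivn_den n x : (rderivn n x).2 = x.2 ^+ (2 ^ n).
Proof.
elim: n => [|n IH]; first by rewrite expr1.
by rewrite rderivnS /= IH -exprM expnS mulnC.
Qed.

Lemma rderivn2 n x : x.2 != 0 -> (rderivn n x).2 != 0.
Proof. by move=> H; rewrite rderivn_den expf_neq0. Qed.

Lemma rderivn_nz n j x : (j <= n)%N -> (rderivn n x).1 != 0 -> (rderivn j x).1 != 0.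
Proof.
elim: n => [|n IH] Hj H.
  by move: Hj; rewrite leqn0 => /eqP ->.
case: (ltngtP j n.+1) Hj => // [Hj _|-> //].
by apply: IH => //; apply: rderiv_nz1; rewrite -rderivnS.
Qed.

Lemma vz_rderivn n x z : x.1 != 0 -> x.2 != 0 -> (rderivn n x).1 != 0 ->
   vz z x - n%:Z <= vz z (rderivn n x) /\ (0 <= vz z x -> 0 <= vz z (rderivn n x)).
Proof.
move=> a0 b0; elim: n => [|n IH] H; first by rewrite subr0.
have H' : (rderivn n x).1 != 0 by apply: (rderivn_nz (leqnSn n) H).
have [I1 I2] := IH H'.
rewrite rderivnS in H *.
have [J1 J2] := vz_rderiv z H' (rderivn2 n b0) H.
split; last by move=> h; apply: J2; apply: I2.
move: I1 J1; set A := vz z x; set B := vz z (rderivn n x); set C := vz z (rderiv _).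
move=> *; lia.
Qed.

Lemma vz_rderivn_ex n x z : x.1 != 0 -> x.2 != 0 -> (vz z x < 0 \/ n%:Z <= vz z x) ->
   (rderivn n x).1 != 0 /\ vz z (rderivn n x) = vz z x - n%:Z.
Proof.
move=> a0 b0; elim: n => [|n IH] H; first by rewrite subr0.
have [I1 I2] : (rderivn n x).1 != 0 /\ vz z (rderivn n x) = vz z x - n%:Z.
  by apply: IH; case: H => H; [left|right]; lia.
rewrite rderivnS.
have hv : vz z (rderivn n x) != 0 by rewrite I2; apply/eqP; case: H => H; lia.
have [J1 J2] := vz_rderiv_ex I1 (rderivn2 n b0) hv.
split => //; rewrite J2 I2; lia.
Qed.

Lemma dg_rderivn n x : x.2 != 0 -> (rderivn n x).1 != 0 -> dg (rderivn n x) <= dg x - n%:Z.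
Proof.
move=> b0; elim: n => [|n IH] H; first by rewrite subr0.
have H' : (rderivn n x).1 != 0 by apply: (rderivn_nz (leqnSn n) H).
have I1 := IH H'.
rewrite rderivnS in H *.
have J1 := dg_rderiv (rderivn2 n b0) H.
move: I1 J1; set A := dg x; set B := dg (rderivn n x); set C := dg (rderiv _).
move=> *; lia.
Qed.

Lemma rderiv_sub x w : rderiv (rsubpoly x w) = rsubpoly (rderiv x) w^`().
Proof.
rewrite /rderiv /rsubpoly /=; congr (_, _).
rewrite derivB derivM; ring.
Qed.

Lemma rderivn_sub n x w : rderivn n (rsubpoly x w) = rsubpoly (rderivn n x) (w^`(n)).
Proof.
elim: n => [|n IH]; first by [].
by rewrite !rderivnS IH rderiv_sub derivnS.
Qed.


Definition nz x := (x.1 != 0) && (x.2 != 0).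

Lemma nz_rmul x y : nz x -> nz y -> nz (rmul x y).
Proof. by case/andP=> ? ? /andP[? ?]; rewrite /nz /= !mulf_neq0. Qed.

Lemma vz_rmul x y z : nz x -> nz y -> vz z (rmul x y) = vz z x + vz z y.
Proof.
case/andP=> ? ? /andP[? ?]; rewrite /vz /= !mupM //.
move: (mup z x.1) (mup z x.2) (mup z y.1) (mup z y.2) => *; lia.
Qed.

Lemma dg_rmul x y : nz x -> nz y -> dg (rmul x y) = dg x + dg y.
Proof.
case/andP=> a b /andP[c d]; rewrite /dg /= !size_mul //.
move: a b c d; rewrite -!size_poly_gt0.
move: (size x.1) (size x.2) (size y.1) (size y.2) => *; lia.
Qed.

Lemma nz_rexp x n : nz x -> nz (rexp x n).
Proof. by case/andP=> ? ?; rewrite /nz /= !expf_neq0. Qed.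

Lemma vz_rexp x n z : nz x -> vz z (rexp x n) = n%:Z * vz z x.
Proof.
case/andP=> ? ?; rewrite /vz /= !mup_exp //.
move: (mup z x.1) (mup z x.2) => *; lia.
Qed.

Lemma dg_rexp x n : nz x -> dg (rexp x n) = n%:Z * dg x.
Proof.
case/andP=> a b; rewrite /dg /=.
have e1 := size_exp x.1 n; have e2 := size_exp x.2 n.
have f1 : (0 < size (x.1 ^+ n))%N by rewrite size_poly_gt0 expf_neq0.
have f2 : (0 < size (x.2 ^+ n))%N by rewrite size_poly_gt0 expf_neq0.
move: a b; rewrite -!size_poly_gt0.
move: e1 e2 f1 f2; move: (size (x.1 ^+ n)) (size (x.2 ^+ n)) (size x.1) (size x.2) => *; nia.
Qed.

Lemma sumz (T : Type) (r : seq T) (G : T -> nat) :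
  \sum_(i <- r) (G i)%:Z = (\sum_(i <- r) G i)%N%:Z.
Proof. by elim: r => [|a r IH]; rewrite ?big_nil ?big_cons // IH. Qed.

Lemma big_rmul_prop (r : seq nat) (G : nat -> {poly F} * {poly F}) z :
  (forall i, i \in r -> nz (G i)) ->
  [/\ nz (\big[@rmul F/(1,1)]_(i <- r) G i),
      vz z (\big[@rmul F/(1,1)]_(i <- r) G i) = \sum_(i <- r) vz z (G i) &
      dg (\big[@rmul F/(1,1)]_(i <- r) G i) = \sum_(i <- r) dg (G i)].
Proof.
elim: r => [|a r IH] H.
  by rewrite !big_nil /nz /vz /dg /= oner_eq0 /=; split => //; rewrite subrr.
have [h1 h2 h3] : _ := IH (fun i hi => H i (@mem_behead _ (a :: r) i hi)).
have ha : nz (G a) by apply: H; rewrite inE eqxx.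
rewrite !big_cons; split.
- exact: nz_rmul.
- by rewrite vz_rmul // h2.
- by rewrite dg_rmul // h3.
Qed.


Lemma sum_eq_count (S : seq F) (x : F) :
  (\sum_(z <- S) (x == z : nat) = count_mem x S)%N.
Proof.
elim: S => [|y S IH]; first by rewrite big_nil.
by rewrite big_cons IH /= eq_sym.
Qed.

Lemma sum_count_roots (S rs : seq F) : uniq S -> {subset rs <= S} ->
  (\sum_(z <- S) count_mem z rs = size rs)%N.
Proof.
move=> US; elim: rs => [|x rs IH] sub.
  by rewrite big1_seq.
have h : {subset rs <= S} by move=> y hy; apply: sub; rewrite inE hy orbT.
rewrite /= -IH // big_split /= sum_eq_count count_uniq_mem //.
by rewrite sub // inE eqxx.
Qed.

Lemma sum_mup (a : {poly F}) (S : seq F) : a != 0 -> uniq S ->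
  (forall z, root a z -> z \in S) -> ((size a).-1 = \sum_(z <- S) mup z a)%N.
Proof.
move=> a0 US HS.
have [rs Ea] := closed_field_poly_normal a.
have l0 : lead_coef a != 0 by rewrite lead_coef_eq0.
have Em : forall z, mup z a = count_mem z rs.
  by move=> z; rewrite {1}Ea -mul_polyC mupMr ?mu_prod_XsubC // rootC.
have sub : {subset rs <= S}.
  move=> y hy; apply: HS; rewrite {1}Ea rootZ // root_prod_XsubC //.
under eq_bigr do rewrite Em.
rewrite sum_count_roots // {1}Ea size_scale // size_prod_XsubC //.
Qed.

Lemma sum_vz_dg (x : {poly F} * {poly F}) (S : seq F) : nz x -> uniq S ->
  (forall z, root x.1 z || root x.2 z -> z \in S) ->
  dg x = \sum_(z <- S) vz z x.
Proof.
case/andP=> a0 b0 US HS.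
have e1 := sum_mup a0 US (fun z h => HS z (introT orP (or_introl h))).
have e2 := sum_mup b0 US (fun z h => HS z (introT orP (or_intror h))).
rewrite /vz /dg big_split /= sumrN !sumz -e1 -e2.
move: a0 b0; rewrite -!size_poly_gt0.
move: (size x.1) (size x.2) => *; lia.
Qed.


Lemma rzero_of_vz x z : x.1 != 0 -> x.2 != 0 -> 0 < vz z x -> rzero_at x z.
Proof.
move=> a0 b0 hv.
have [a1 [Na1 Ea]] := mup_split z a0.
have [b1 [Nb1 Eb]] := mup_split z b0.
have lt : (mup z x.2 < mup z x.1)%N.
  by move: hv; rewrite /vz; move: (mup z x.1) (mup z x.2) => *; lia.
set al := mup z x.1 in Ea lt *; set be := mup z x.2 in Eb lt *.
exists (a1 * ('X - z%:P) ^+ (al - be)), b1; split; [|split].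
- rewrite Ea Eb -{1}(subnK (ltnW lt)) exprD; ring.
- exact: Nb1.
- rewrite hornerM horner_exp !hornerE subrr expr0n /=.
  by rewrite subn_eq0 leqNgt lt mulr0.
Qed.

Lemma mup_add_lt (a c : {poly F}) z : a != 0 -> c != 0 -> (mup z a < mup z c)%N ->
  mup z (a + c) = mup z a.
Proof.
move=> a0 c0 lt.
have ac0 : a + c != 0.
  apply/negP => /eqP e; have e' : a = - c by apply/eqP; rewrite -subr_eq0 opprK e.
  move: lt; rewrite e'.
  have -> : mup z (- c) = mup z c.
    by rewrite -mulN1r mupMr // rootN root1.
  by rewrite ltnn.
apply/eqP; rewrite eqn_leq; apply/andP; split.
  rewrite mup_leq //; apply/negP => h.
  have h2 : ('X - z%:P) ^+ (mup z a).+1 %| c by rewrite -mup_geq.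
  have : ('X - z%:P) ^+ (mup z a).+1 %| a.
    by rewrite -(dvdp_addl a h2).
  by rewrite -mup_geq // ltnn.
rewrite mup_geq // dvdp_add // -mup_geq // ltnW //.
Qed.

Lemma sum_lin (S : seq F) (X A1 A2 A3 A4 : F -> int) (c1 c2 c3 c4 : int) :
  (forall z, c1 * A1 z + c2 * A2 z + c3 * A3 z + c4 * A4 z <= X z) ->
  c1 * (\sum_(z <- S) A1 z) + c2 * (\sum_(z <- S) A2 z) +
  c3 * (\sum_(z <- S) A3 z) + c4 * (\sum_(z <- S) A4 z) <= \sum_(z <- S) X z.
Proof.
move=> H; rewrite !mulr_sumr -!big_split /=.
by apply: ler_sum => z _; apply: H.
Qed.

Lemma roots_list (c : {poly F}) : c != 0 -> exists rs : seq F, forall z, root c z -> z \in rs.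
Proof.
move=> c0; have [rs Ec] := closed_field_poly_normal c; exists rs => z.
rewrite {1}Ec rootZ ?lead_coef_eq0 // root_prod_XsubC //.
Qed.

Section Fac.
Variables (p q : {poly F}).
Hypotheses (p0 : p != 0) (q0 : q != 0) (cop : coprimep p q).
Let f := (p, q).

Lemma nz_f : nz f. Proof. by rewrite /nz /= p0 q0. Qed.

Lemma root_q_notp z : root q z -> ~~ root p z.
Proof.
move=> h; have := coprimep_root (q := p) _ h.
by rewrite coprimep_sym cop /root => /(_ isT).
Qed.

Lemma vz_f_pole z : root q z -> vz z f = - (mup z q)%:Z.
Proof. by move=> h; rewrite /vz /= mupNroot ?root_q_notp // sub0r. Qed.

Lemma vz_f_reg z : ~~ root q z -> vz z f = (mup z p)%:Z.
Proof. by move=> h; rewrite /vz /= (mupNroot h) subr0. Qed.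

Lemma mup_root_pos (a : {poly F}) z : a != 0 -> root a z -> (0 < mup z a)%N.
Proof. by move=> a0 h; rewrite -XsubC_dvd // dvdp_XsubCl. Qed.

Definition G l mi := rderivn mi (rexp f l).

Lemma G_den l mi z : root (G l mi).2 z -> root q z.
Proof.
rewrite /G rderivn_den /= /root !horner_exp => /eqP.
by move=> /eqP; rewrite !expf_eq0 => /andP[_ /andP[_ ->]].
Qed.

Lemma G_nz l mi : (mi <= l)%N -> (exists z0, root q z0 || root p z0) -> nz (G l mi).
Proof.
move=> hm [z0 hz].
case: l hm => [|l] hm.
  by move: hm; rewrite leqn0 => /eqP ->; rewrite /G /= /nz /= !expr0 oner_eq0.
have nzf := nz_rexp l.+1 nz_f; have /andP[a b] := nzf.
suff [h _] : (G l.+1 mi).1 != 0 /\ True.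
  by rewrite /nz h /G rderivn2.
split => //; rewrite /G; apply: (proj1 (vz_rderivn_ex (n := mi) (z := z0) a b _)).
rewrite vz_rexp ?nz_f //.
case/orP: hz => hz.
  left; rewrite vz_f_pole //; have := mup_root_pos q0 hz.
  move: (mup z0 q) => *; lia.
right; rewrite vz_f_reg; last by have := coprimep_root cop hz.
have := mup_root_pos p0 hz; move: (mup z0 p) => *; nia.
Qed.

Lemma G_vz_pole l mi z : root q z -> (mi <= l)%N -> nz (G l mi) ->
  vz z (G l mi) = - (l * mup z q + mi)%N%:Z.
Proof.
move=> hz hm nzG.
case: l hm nzG => [|l] hm nzG.
  by move: hm; rewrite leqn0 => /eqP ->; rewrite /G /vz /= !expr0 subrr.
have nzf := nz_rexp l.+1 nz_f; have /andP[a b] := nzf.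
have hv : vz z (rexp f l.+1) = l.+1%:Z * - (mup z q)%:Z.
  by rewrite vz_rexp ?nz_f ?vz_f_pole.
have hq := mup_root_pos q0 hz.
rewrite /G (proj2 (vz_rderivn_ex (n := mi) (z := z) a b _)) hv.
  by move: hq; move: (mup z q) => *; lia.
by left; move: hq; move: (mup z q) => *; lia.
Qed.

Lemma G_vz_reg l mi z : ~~ root q z -> nz (G l mi) ->
  0 <= vz z (G l mi) /\ (l * mup z p)%N%:Z - mi%:Z <= vz z (G l mi).
Proof.
move=> hz /andP[g1 _].
have /andP[a b] := nz_rexp l nz_f.
have [h1 h2] := vz_rderivn z a b g1.
rewrite vz_rexp ?nz_f ?vz_f_reg // in h1 h2; split.
  by apply: h2; move: (mup z p) => *; lia.
by move: h1; move: (mup z p) (vz _ _) => *; lia.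
Qed.

Lemma G_dg l mi : nz (G l mi) -> dg (G l mi) <= l%:Z * dg f - mi%:Z.
Proof.
move=> /andP[g1 _].
have /andP[a b] := nz_rexp l nz_f.
have := dg_rderivn b g1; rewrite dg_rexp ?nz_f //.
Qed.


Lemma big_rmul_den (r : seq nat) (H : nat -> {poly F} * {poly F}) z :
  (forall i, root (H i).2 z -> root q z) ->
  root (\big[@rmul F/(1,1)]_(i <- r) H i).2 z -> root q z.
Proof.
move=> hH; elim: r => [|a r IH]; first by rewrite big_nil /= (negbTE (root1 z)).
by rewrite big_cons /= rootM => /orP[/hH|/IH].
Qed.

Section U.
Variables (k l0 : nat) (l m : nat -> nat).
Hypothesis Hlm : forall j, (1 <= j <= k)%N -> (m j <= l j)%N.
Hypothesis W : exists z0, root q z0 || root p z0.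
Let nn := (l0 + \sum_(1 <= i < k.+1) l i)%N.
Let MM := (\sum_(1 <= i < k.+1) m i)%N.
Let u := Pdiff k l0 l m f.

Lemma Gi_nz i : i \in index_iota 1 k.+1 -> nz (G (l i) (m i)).
Proof.
rewrite mem_index_iota => hi; apply: G_nz => //; apply: Hlm.
by rewrite -ltnS.
Qed.

Lemma Gi_le i : i \in index_iota 1 k.+1 -> (m i <= l i)%N.
Proof. by rewrite mem_index_iota => hi; apply: Hlm; rewrite -ltnS. Qed.

Lemma u_parts z :
  [/\ nz (\big[@rmul F/(1,1)]_(1 <= i < k.+1) G (l i) (m i)),
      vz z (\big[@rmul F/(1,1)]_(1 <= i < k.+1) G (l i) (m i)) =
        \sum_(1 <= i < k.+1) vz z (G (l i) (m i)) &
      dg (\big[@rmul F/(1,1)]_(1 <= i < k.+1) G (l i) (m i)) =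
        \sum_(1 <= i < k.+1) dg (G (l i) (m i))].
Proof. exact: big_rmul_prop Gi_nz. Qed.

Lemma u_nz : nz u.
Proof.
have [h _ _] := u_parts 0.
exact: nz_rmul (nz_rexp _ nz_f) h.
Qed.

Lemma u_den z : root u.2 z -> root q z.
Proof.
rewrite /u /Pdiff /= rootM => /orP[|].
  by rewrite /root horner_exp expf_eq0 => /andP[_].
by apply: big_rmul_den => i; apply: G_den.
Qed.

Lemma u_vz z : vz z u = l0%:Z * vz z f + \sum_(1 <= i < k.+1) vz z (G (l i) (m i)).
Proof.
have [h1 h2 _] := u_parts z.
by rewrite /u /Pdiff vz_rmul ?nz_rexp ?nz_f // vz_rexp ?nz_f // h2.
Qed.

Lemma u_pole z : root q z -> vz z u = - (mup z q * nn + MM)%N%:Z.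
Proof.
move=> hz; rewrite u_vz vz_f_pole //.
rewrite big_seq_cond (eq_bigr (fun i => - (l i * mup z q + m i)%N%:Z)); last first.
  move=> i /andP[hi _]; apply: G_vz_pole => //; [exact: Gi_le | exact: Gi_nz].
rewrite -big_seq_cond sumrN sumz big_split /= -big_distrl /= /nn /MM.
move: (mup z q) (\sum_(1 <= i < k.+1) l i)%N (\sum_(1 <= i < k.+1) m i)%N => *; lia.
Qed.

Lemma u_reg z : ~~ root q z ->
  0 <= vz z u /\ (mup z p * nn)%N%:Z - MM%:Z <= vz z u.
Proof.
move=> hz; rewrite u_vz vz_f_reg //; split.
  apply: addr_ge0; first by move: (mup z p) => *; lia.
  rewrite big_seq_cond; apply: sumr_ge0 => i /andP[hi _].
  exact: (proj1 (G_vz_reg hz (Gi_nz hi))).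
have : \sum_(1 <= i < k.+1) ((l i * mup z p)%N%:Z - (m i)%:Z) <=
       \sum_(1 <= i < k.+1) vz z (G (l i) (m i)).
  rewrite big_seq_cond [X in _ <= X]big_seq_cond; apply: ler_sum => i /andP[hi _].
  exact: (proj2 (G_vz_reg hz (Gi_nz hi))).
rewrite sumrB !sumz -big_distrl /= /nn /MM.
move: (mup z p) (\sum_(1 <= i < k.+1) l i)%N (\sum_(1 <= i < k.+1) m i)%N (\sum_(1 <= i < k.+1) vz z _) => *; nia.
Qed.

Lemma u_dg : dg u <= nn%:Z * dg f - MM%:Z.
Proof.
have [h1 _ h3] := u_parts 0.
rewrite /u /Pdiff dg_rmul ?nz_rexp ?nz_f // dg_rexp ?nz_f // h3.
have : \sum_(1 <= i < k.+1) dg (G (l i) (m i)) <=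
       \sum_(1 <= i < k.+1) ((l i)%:Z * dg f - (m i)%:Z).
  rewrite big_seq_cond [X in _ <= X]big_seq_cond; apply: ler_sum => i /andP[hi _].
  exact: G_dg (Gi_nz hi).
have E : \sum_(1 <= i < k.+1) ((l i)%:Z * dg f - (m i)%:Z) =
    (\sum_(1 <= i < k.+1) l i)%N%:Z * dg f - (\sum_(1 <= i < k.+1) m i)%N%:Z.
  by rewrite sumrB -!sumz mulr_suml.
rewrite E /nn /MM.
move: (dg f) (\sum_(1 <= i < k.+1) l i)%N (\sum_(1 <= i < k.+1) m i)%N (\sum_(1 <= i < k.+1) dg (G (l i) (m i))) => *; nia.
Qed.

End U.

End Fac.

End Val.

Section Main.
Variable F : numClosedFieldType.

Lemma mupN (c : {poly F}) z : mup z (- c) = mup z c.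
Proof. by rewrite -mulN1r mupMr // rootN root1. Qed.

Lemma main_F (k l0 : nat) (l m : nat -> nat) (w p q : {poly F}) :
  (1 <= k)%N -> (0 < l0)%N ->
  (forall j, (1 <= j <= k)%N -> (m j <= l j)%N) ->
  (0 < \sum_(1 <= j < k.+1) m j < \sum_(1 <= j < k.+1) l j)%N ->
  w != 0 -> ((size w).-1 < l0)%N ->
  q != 0 -> coprimep p q ->
  ~ (exists c : F, p = c *: q) ->
  (forall z : F, root q z -> ('X - z%:P) ^+ l0 %| q) ->
  exists z1 z2 : F, z1 != z2 /\
    rzero_at (rsubpoly (Pdiff k l0 l m (p, q)) w) z1 /\
    rzero_at (rsubpoly (Pdiff k l0 l m (p, q)) w) z2.
Proof.
move=> hk hl0 Hlm /andP[HM1 HM2] w0 hw q0 cop ncst Hpole.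
have p0 : p != 0.
  by apply/eqP => p0; apply: ncst; exists 0; rewrite p0 scale0r.
have W : exists z0, root q z0 || root p z0.
  case: (eqVneq (size q) 1) => sq; last first.
    by have [z hz] := closed_rootP q sq; exists z; rewrite hz.
  case: (eqVneq (size p) 1) => sp; last first.
    by have [z hz] := closed_rootP p sp; exists z; rewrite hz orbT.
  exfalso; apply: ncst.
  have [c c0 ->] := size_poly1P q (introT eqP sq); have [d d0 ->] := size_poly1P p (introT eqP sp).
  by exists (d / c); rewrite -mul_polyC -polyCM mulfVK.
set u := Pdiff k l0 l m (p, q).
set nn := (l0 + \sum_(1 <= i < k.+1) l i)%N.
set MM := (\sum_(1 <= i < k.+1) m i)%N.
set mw := (size w).-1.
have Upole : forall z, root q z -> vz z u = - (mup z q * nn + MM)%N%:Z.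
  by move=> z hz; apply: u_pole.
have Ureg : forall z, ~~ root q z -> 0 <= vz z u /\ (mup z p * nn)%N%:Z - MM%:Z <= vz z u.
  by move=> z hz; apply: u_reg.
have Udg : dg u <= nn%:Z * dg (p, q) - MM%:Z by apply: u_dg.
have Uden : forall z, root u.2 z -> root q z by move=> z; apply: u_den.
have mu2 : forall z, ~~ root q z -> mup z u.2 = 0%N.
  by move=> z hz; apply: mupNroot; apply: contra hz; apply: Uden.
have nnMM : (l0 + 1 <= nn - MM)%N.
  by rewrite /nn /MM; move: HM2 hl0; move: (\sum_(1 <= i < k.+1) l i)%N (\sum_(1 <= i < k.+1) m i)%N ; clear - F; intros; lia.
have mwl0 : (mw < l0)%N by [].
have sw : size w = mw.+1 by rewrite /mw prednK // size_poly_gt0.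
have /andP[u1 u2] : nz u := u_nz p0 q0 cop l0 Hlm W.
clearbody u.
set Phi := rsubpoly u w.
case: (eqVneq Phi.1 0) => [E|Phi1].
  exists 0, 1; split; first by rewrite eq_sym oner_eq0.
  by split; exists 0, 1; rewrite E mul0r mul0r hornerE oner_eq0 horner0.
have Phi2 : Phi.2 = u.2 by [].
have Phi1E : Phi.1 = u.1 - w * u.2 by [].
have nzPhi : nz Phi by rewrite /nz Phi1 Phi2 u2.
case: (classic (exists z1 z2, z1 != z2 /\ 0 < vz z1 Phi /\ 0 < vz z2 Phi)).
  move=> [z1 [z2 [ne [h1 h2]]]]; exists z1, z2; split => //.
  by split; apply: rzero_of_vz => //; rewrite Phi2.
move=> Nuniq; exfalso.
have Uniq : forall z1 z2, 0 < vz z1 Phi -> 0 < vz z2 Phi -> z1 = z2.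
  move=> z1 z2 h1 h2; case: (eqVneq z1 z2) => // ne.
  by exfalso; apply: Nuniq; exists z1, z2.
have Phi_pole : forall z, root q z -> vz z Phi = vz z u.
  move=> z hz; rewrite /vz Phi2 Phi1E mup_add_lt //.
  - by rewrite oppr_eq0 mulf_neq0.
  - rewrite mupN (mupM z w0 u2).
    have := Upole z hz; rewrite /vz.
    move: HM1 (mup z u.1) (mup z u.2) (mup z w) ; clear - F; intros; lia.
have Phi_reg : forall z, ~~ root q z -> 0 <= vz z Phi.
  by move=> z hz; rewrite /vz Phi2 mu2.
have Phi_B : forall z, ~~ root q z -> root p z -> vz z Phi <= mw%:Z.
  move=> z hz hp; rewrite /vz Phi2 mu2 // Phi1E (addrC u.1) mup_add_lt //.
  - rewrite mupN (mupM z w0 u2) mu2 // addn0.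
    by have := mup_le_size z w0; rewrite sw ltnS; move: (mup z w) ; clear - F; intros; lia.
  - by rewrite oppr_eq0 mulf_neq0.
  - rewrite mupN (mupM z w0 u2) mu2 // addn0.
    have := mup_le_size z w0; rewrite sw ltnS => h1.
    have [_ h2] := Ureg z hz; move: h2; rewrite /vz mu2 //.
    have h3 := mup_root_pos p0 hp.
    move: h1 h3 nnMM mwl0; move: (mup z w) (mup z p) (mup z u.1) ; clear - F; intros; nia.
have Phi_dg : dg u < mw%:Z -> dg Phi = mw%:Z.
  move=> h; rewrite /dg Phi2 Phi1E (addrC u.1) size_polyDl.
    rewrite size_polyN size_mul // sw.
    by move: u2; rewrite -size_poly_gt0; move: (size u.2) ; clear - F; intros; lia.
  rewrite size_polyN size_mul // sw.
  move: h u2; rewrite /dg -size_poly_gt0; move: (size u.1) (size u.2) ; clear - F; intros; lia.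
set Psi := rderivn mw.+1 u.
have EPsi : rderivn mw.+1 Phi = Psi.
  rewrite /Phi rderivn_sub derivn_poly0 ?sw // /rsubpoly mul0r subr0.
  by rewrite /Psi; case: (rderivn mw.+1 u).
have Psi1 : Psi.1 != 0.
  have [zs hzs] := W; case/orP: hzs => hzs.
    apply: (proj1 (vz_rderivn_ex (n := mw.+1) (z := zs) u1 u2 _)); left.
    rewrite Upole //; have := mup_root_pos q0 hzs; move: HM1 (mup zs q) ; clear - F; intros; lia.
  have hzq : ~~ root q zs by have := coprimep_root cop hzs.
  apply: (proj1 (vz_rderivn_ex (n := mw.+1) (z := zs) u1 u2 _)); right.
  have [_ h] := Ureg zs hzq; have := mup_root_pos p0 hzs.
  move: h nnMM mwl0; move: (mup zs p) (vz zs u) ; clear - F; intros; nia.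
have Psi2 : Psi.2 != 0 by apply: rderivn2.
have Psi_den : forall z, root Psi.2 z -> root q z.
  move=> z; rewrite /Psi rderivn_den /root horner_exp expf_eq0 => /andP[_ h].
  exact: Uden.
have Psi_pole : forall z, root q z -> vz z Psi = vz z u - (mw.+1)%:Z.
  move=> z hz; apply: (proj2 (vz_rderivn_ex (n := mw.+1) (z := z) u1 u2 _)); left.
  rewrite Upole //; have := mup_root_pos q0 hz; move: HM1 (mup z q) ; clear - F; intros; lia.
have Psi_reg : forall z, ~~ root q z -> 0 <= vz z Psi /\ vz z u - (mw.+1)%:Z <= vz z Psi.
  move=> z hz; have [h1 h2] := vz_rderivn z u1 u2 Psi1; split => //.
  by apply: h2; have [] := Ureg z hz.
have Psi_Phi : forall z, vz z Phi - (mw.+1)%:Z <= vz z Psi.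
  move=> z; have /andP[a b] := nzPhi.
  have c : (rderivn mw.+1 Phi).1 != 0 by rewrite EPsi.
  have [h1 _] := vz_rderivn z a b c.
  by rewrite EPsi in h1.
have Psi_dg1 : dg Psi <= dg Phi - (mw.+1)%:Z.
  have /andP[a b] := nzPhi.
  have c : (rderivn mw.+1 Phi).1 != 0 by rewrite EPsi.
  by have := dg_rderivn b c; rewrite EPsi.
have Psi_dg2 : dg Psi <= dg u - (mw.+1)%:Z by apply: dg_rderivn.
have [z0 [Hz0 [hq0 Hcase]]] : exists z0, (forall z, z != z0 -> vz z Phi <= 0) /\
    ~~ root q z0 /\ (0 < vz z0 Phi \/ ~~ root p z0).
  case: (classic (exists z, 0 < vz z Phi)) => [[z0 h0]|N0].
    exists z0; split; [|split].
    - move=> z ne; rewrite leNgt; apply/negP => h.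
      by move/negP: ne; apply; apply/eqP; apply: Uniq h h0.
    - apply/negP => hq; move: h0; rewrite Phi_pole // Upole //.
      by move: HM1 (mup z0 q * nn + MM)%N ; clear - F; intros; lia.
    - by left.
  have pq0 : p * q != 0 by rewrite mulf_neq0.
  have [z0 hz0] := closed_nonrootP (p * q) pq0.
  move: hz0; rewrite rootM negb_or => /andP[hp hq].
  exists z0; split; [|split] => //; last by right.
  move=> z _; rewrite leNgt; apply/negP => h; apply: N0; by exists z.
have c0 : p * q * Phi.1 * Psi.1 != 0 by rewrite !mulf_neq0.
have [rs Hrs] := roots_list c0.
set S := undup (z0 :: rs).
have US : uniq S := undup_uniq _.
have inS : forall z, root (p * q * Phi.1 * Psi.1) z -> z \in S.
  by move=> z h; rewrite mem_undup inE Hrs ?orbT.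
have z0S : z0 \in S by rewrite mem_undup inE eqxx.
have EPhi : dg Phi = \sum_(z <- S) vz z Phi.
  apply: sum_vz_dg => // z /orP[h|h]; apply: inS; rewrite !rootM ?h ?orbT //.
  by rewrite Phi2 in h; rewrite (Uden z h) orbT.
have EPsis : dg Psi = \sum_(z <- S) vz z Psi.
  apply: sum_vz_dg => //; first by rewrite /nz Psi1 Psi2.
  move=> z /orP[h|h]; apply: inS; rewrite !rootM ?h ?orbT //.
  by rewrite (Psi_den z h) orbT.
have Ea : (size p).-1 = \sum_(z <- S) mup z p.
  by apply: sum_mup => // z h; apply: inS; rewrite !rootM h.
have Eb : (size q).-1 = \sum_(z <- S) mup z q.
  by apply: sum_mup => // z h; apply: inS; rewrite !rootM h orbT.
have Ed : \sum_(z <- S) ((z0 == z) : nat)%:Z = 1.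
  by rewrite sumz sum_eq_count count_uniq_mem // z0S.
have rq : forall z, root q z -> mup z p = 0%N.
  move=> z hz; apply: mupNroot.
  by have := coprimep_root (p := q) (q := p) _ hz; rewrite coprimep_sym cop => /(_ isT).
have nnMM2 : (mw.+2 <= nn - MM)%N by apply: leq_trans nnMM; rewrite addn1 ltnS.
have P1 : forall z, 1 * (mup z p)%:Z + 0 * (mup z q)%:Z + (- (mw.+1)%:Z) * (root q z : nat)%:Z +
    (- (mw.+1)%:Z) * ((z0 == z) : nat)%:Z <= vz z Psi - vz z Phi.
  move=> z; case hz: (root q z).
    have ne : (z0 == z) = false by apply/negP => /eqP e; move: hq0; rewrite e hz.
    rewrite ne rq // Psi_pole // Phi_pole //.
    by move: (mup z q) (vz z u); clear - F; intros; lia.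
  case: (eqVneq z0 z) => [<-|ne].
    case hp: (root p z0).
      have [_ h] := Psi_reg z0 hq0; have := Ureg z0 hq0 => [[_ h2]].
      have h3 := Phi_B z0 hq0 hp; have h4 := mup_root_pos p0 hp.
      move: h h2 h3 h4 nnMM2; move: (mup z0 p) (mup z0 q) (vz z0 u) (vz z0 Psi) (vz z0 Phi).
      clear - F; intros; nia.
    rewrite mupNroot ?hp //; have := Psi_Phi z0.
    by move: (mup z0 q) (vz z0 Psi) (vz z0 Phi); clear - F; intros; lia.
  have hz' : ~~ root q z by rewrite hz.
  have e0 : vz z Phi = 0.
    apply/eqP; rewrite eq_le Phi_reg // andbT; apply: Hz0; by rewrite eq_sym.
  rewrite e0; have [h1 h2] := Psi_reg z hz'; have [_ h3] := Ureg z hz'.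
  move: h1 h2 h3 nnMM2; move: (mup z p) (mup z q) (vz z u) (vz z Psi).
  clear - F; intros; nia.
have S1 := @sum_lin F S (fun z => vz z Psi - vz z Phi) (fun z => (mup z p)%:Z) (fun z => (mup z q)%:Z)
  (fun z => (root q z : nat)%:Z) (fun z => ((z0 == z) : nat)%:Z) _ _ _ _ P1.
rewrite sumrB -EPhi -EPsis Ed !sumz -Ea in S1.
set T := (\sum_(z <- S) (root q z : nat))%N in S1.
have P0a : forall z, 0 * (mup z p)%:Z + 0 * (mup z q)%:Z + l0%:Z * (root q z : nat)%:Z +
    0 * ((z0 == z) : nat)%:Z <= (mup z q)%:Z.
  move=> z; rewrite !mul0r add0r addr0; case hz: (root q z); last by rewrite mulr0.
  by rewrite mulr1 lez_nat mup_geq // Hpole.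
have S2 := @sum_lin F S (fun z => (mup z q)%:Z) (fun z => (mup z p)%:Z) (fun z => (mup z q)%:Z)
  (fun z => (root q z : nat)%:Z) (fun z => ((z0 == z) : nat)%:Z) _ _ _ _ P0a.
rewrite !sumz -Eb -/T in S2.
have P0b : forall z, 0 * (mup z p)%:Z + 1 * (mup z q)%:Z + 0 * (root q z : nat)%:Z +
    0 * ((z0 == z) : nat)%:Z <= (size q)%:Z * (root q z : nat)%:Z.
  move=> z; rewrite !mul0r add0r !addr0 mul1r; case hz: (root q z).
    by rewrite mulr1 lez_nat ltnW // mup_le_size.
  by rewrite mupNroot ?hz // mulr0.
have S3 := @sum_lin F S (fun z => (size q)%:Z * (root q z : nat)%:Z) (fun z => (mup z p)%:Z) (fun z => (mup z q)%:Z)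
  (fun z => (root q z : nat)%:Z) (fun z => ((z0 == z) : nat)%:Z) _ _ _ _ P0b.
rewrite -mulr_sumr !sumz -Eb -/T in S3.
set K := vz z0 Phi.
have P2 : forall z, vz z Phi = (- nn%:Z) * (mup z q)%:Z + (- MM%:Z) * (root q z : nat)%:Z + K * ((z0 == z) : nat)%:Z.
  move=> z; case hz: (root q z).
    have ne : (z0 == z) = false by apply/negP => /eqP e; move: hq0; rewrite e hz.
    rewrite ne Phi_pole // Upole //.
    by move: (mup z q); clear - F; intros; lia.
  have hz' : ~~ root q z by rewrite hz.
  rewrite mupNroot //.
  case: (eqVneq z0 z) => [e|ne]; first by rewrite -e in hz *; rewrite /K /=; clear; lia.
  have e0 : vz z Phi = 0.
    by apply/eqP; rewrite eq_le Phi_reg // andbT; apply: Hz0; rewrite eq_sym.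
  by rewrite e0 /=; clear; lia.
have P2a : forall z, 0 * (mup z p)%:Z + (- nn%:Z) * (mup z q)%:Z + (- MM%:Z) * (root q z : nat)%:Z +
    K * ((z0 == z) : nat)%:Z <= vz z Phi.
  by move=> z; rewrite P2 mul0r add0r.
have P2b : forall z, 0 * (mup z p)%:Z + nn%:Z * (mup z q)%:Z + MM%:Z * (root q z : nat)%:Z +
    (- K) * ((z0 == z) : nat)%:Z <= - vz z Phi.
  move=> z; rewrite P2 mul0r add0r; move: (mup z q) (root q z : nat) ((z0 == z) : nat).
  clear; intros; lia.
have S4 := @sum_lin F S (fun z => vz z Phi) (fun z => (mup z p)%:Z) (fun z => (mup z q)%:Z)
  (fun z => (root q z : nat)%:Z) (fun z => ((z0 == z) : nat)%:Z) _ _ _ _ P2a.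
have S5 := @sum_lin F S (fun z => - vz z Phi) (fun z => (mup z p)%:Z) (fun z => (mup z q)%:Z)
  (fun z => (root q z : nat)%:Z) (fun z => ((z0 == z) : nat)%:Z) _ _ _ _ P2b.
rewrite -EPhi Ed !sumz -Ea -Eb -/T in S4.
rewrite sumrN -EPhi Ed !sumz -Ea -Eb -/T in S5.
have Hsp : (0 < size p)%N by rewrite size_poly_gt0.
have Hsq : (0 < size q)%N by rewrite size_poly_gt0.
have dgf : dg (p, q) = (size p)%:Z - (size q)%:Z by [].
rewrite dgf in Udg.
have T0 : (0 < T)%N.
  rewrite lt0n; apply/negP => /eqP T0.
  have sp1 : size p = 1%N.
    move: S1 Psi_dg1 Hsp; rewrite T0; move: (dg Psi) (dg Phi) (size p); clear; intros; lia.
  have sq1 : size q = 1%N.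
    move: S3 Hsq; rewrite T0; move: (size q) (\sum_(i <- S) mup i q)%N; clear; intros; nia.
  apply: ncst.
  have [c c1 ->] := size_poly1P q (introT eqP sq1); have [d d0 ->] := size_poly1P p (introT eqP sp1).
  by exists (d / c); rewrite -mul_polyC -polyCM mulfVK.
have ab : ((size p).-1 <= (size q).-1)%N.
  have h1 : ((size p).-1 <= mw.+1 * T)%N.
    move: S1 Psi_dg1 mwl0; move: (dg Psi) (dg Phi) ((size p).-1); clear - F; intros; nia.
  have h2 : (mw.+1 * T <= l0 * T)%N by rewrite leq_mul2r mwl0 orbT.
  have h3 : (l0 * T <= (size q).-1)%N.
    move: S2; move: ((size q).-1); clear - F; intros; nia.
  by apply: leq_trans h3; apply: leq_trans h2.
have du : dg u < mw%:Z.
  move: Udg ab Hsp Hsq HM1; move: (dg u) (size p) (size q); clear - F; intros; nia.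
have dPhi := Phi_dg du.
have Keq : K = mw%:Z + nn%:Z * ((size q).-1)%:Z + MM%:Z * T%:Z.
  move: S4 S5; rewrite dPhi; move: ((size q).-1); clear - F; intros; nia.
have b1 : (1 <= (size q).-1)%N.
  move: S2 T0 hl0; move: ((size q).-1); clear - F; intros; nia.
have nn1 : (1 <= nn)%N by rewrite /nn; move: hl0; clear - F; intros; lia.
case hp: (root p z0).
  have := Phi_B z0 hq0 hp; rewrite -/K Keq.
  move: b1 nn1; move: ((size q).-1); clear - F; intros; nia.
have P3 : forall z, (nn%:Z - MM%:Z - (mw.+1)%:Z) * (mup z p)%:Z + (- nn%:Z) * (mup z q)%:Z +
    (- (MM + mw.+1)%:Z) * (root q z : nat)%:Z + (K - (mw.+1)%:Z) * ((z0 == z) : nat)%:Z <= vz z Psi.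
  move=> z; case hz: (root q z).
    have ne : (z0 == z) = false by apply/negP => /eqP e; move: hq0; rewrite e hz.
    rewrite ne rq // Psi_pole // Upole // /=.
    by move: (mup z q); clear - F; intros; lia.
  have hz' : ~~ root q z by rewrite hz.
  rewrite (mupNroot hz') /=.
  case: (eqVneq z0 z) => [e|ne].
    rewrite -e mupNroot ?hp //=; have := Psi_Phi z0; rewrite -/K.
    by move: (vz z0 Psi); clear - F; intros; lia.
  rewrite /=; have [h1 h2] := Psi_reg z hz'; have [_ h3] := Ureg z hz'.
  move: h1 h2 h3 nnMM2; move: (mup z p) (vz z u) (vz z Psi); clear - F; case=> [|r]; intros; nia.
have S6 := @sum_lin F S (fun z => vz z Psi) (fun z => (mup z p)%:Z) (fun z => (mup z q)%:Z)
  (fun z => (root q z : nat)%:Z) (fun z => ((z0 == z) : nat)%:Z) _ _ _ _ P3.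
rewrite -EPsis Ed !sumz -Ea -Eb -/T in S6.
move: S6 Psi_dg2 Udg Keq ab nnMM2 Hsp Hsq HM1 mwl0 S2.
move: (dg Psi) (dg u) (size p) (size q).
clear; intros; nia.
Qed.
End Main.


Theorem theorem2p2 (R : realType) (k l0 : nat) (l m : nat -> nat)
  (w p q : {poly R[i]}) :
  (1 <= k)%N -> (0 < l0)%N ->
  (forall j, (1 <= j <= k)%N -> (m j <= l j)%N) ->
  (0 < \sum_(1 <= j < k.+1) m j < \sum_(1 <= j < k.+1) l j)%N ->
  w != 0 -> ((size w).-1 < l0)%N ->
  q != 0 -> coprimep p q ->
  ~ (exists c : R[i], p = c *: q) ->
  (forall z : R[i], root q z -> ('X - z%:P) ^+ l0 %| q) ->
  exists z1 z2 : R[i], z1 != z2 /\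
    rzero_at (rsubpoly (Pdiff k l0 l m (p, q)) w) z1 /\
    rzero_at (rsubpoly (Pdiff k l0 l m (p, q)) w) z2.
Proof. exact: (@main_F (R[i] : numClosedFieldType)). Qed.
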